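(* As Laurent series in $z$, $$\sum_{n\ge0}\binom{2n+2}{n}z^n=\frac{13}{z^2}+3\left(-\frac{z+1}{z^2}+3\frac{1-z-z^2}{z^2(1-z)}\right)\Psi(-z)+\left(4+\frac6z-\frac4{z^2}\right)\Psi^3(-z)+3\left(4z+2-\frac1z-\frac5{z^2}\right)\Psi^5(-z)\quad\text{modulo }27.$$
   Context: $\Psi(z)=\prod_{j\ge0}(1+z^{3^j})$, so $\Psi(-z)=\prod_{j\ge0}(1-z^{3^j})$. Rational functions are expanded as Laurent series in $z$; ''modulo $27$'' means all coefficients of the difference are divisible by $27$. *)

(* Defs.v *)
From mathcomp Require Import all_boot all_order all_algebra.
Set Implicit Arguments. Unset Strict Implicit. Unset Printing Implicit Defensive.
Import GRing.Theory Num.Theory.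
Local Open Scope ring_scope.

Definition fps := nat -> int.

Definition fadd (f g : fps) : fps := fun n => f n + g n.
Definition fmul (f g : fps) : fps := fun n => \sum_(i < n.+1) f i * g (n - i)%N.
Definition fone : fps := fun n => (n == 0%N)%:R.
Definition fpow (f : fps) (k : nat) : fps := iter k (fmul f) fone.
Definition fpoly (p : {poly int}) : fps := fun n => p`_n.
Definition geom : fps := fun _ => 1.

(* Psi(-z) = prod_{j>=0} (1 - z^(3^j)): the coefficient of z^n is that of the
   finite product over j <= n (factors with j > n only affect degrees > n). *)
Definition PsiNeg : fps :=
  fun n => (\prod_(j < n.+1) (1 - 'X^(3 ^ j)) : {poly int})`_n.

(* Laurent series with a pole of order at most 2 at z = 0 are represented as
   z^(-2) * F with F a power series; lcoef F k is the coefficient of z^k. *)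
Definition lcoef (F : fps) (k : int) : int :=
  match (k + 2)%R with Posz m => F m | Negz _ => 0 end.

(* LHS: sum_{n>=0} binom(2n+2,n) z^n, written as z^(-2) * (z^2 * LHS) *)
Definition lhs_num : fps :=
  fun m => if (2 <= m)%N then ('C(2 * (m - 2) + 2, m - 2))%:R else 0.

(* RHS multiplied by z^2 (so RHS = z^(-2) * rhs_num):
   13 + 3(-(z+1) + 3(1-z-z^2)/(1-z)) Psi(-z) + (4z^2+6z-4) Psi^3(-z)
      + 3(4z^3+2z^2-z-5) Psi^5(-z) *)
Definition rhs_num : fps :=
  fadd (fpoly 13%:P)
  (fadd (fmul (fadd (fpoly (- 3 *: ('X + 1)))
                    (fmul (fpoly (9 *: (1 - 'X - 'X^2))) geom)) PsiNeg)
  (fadd (fmul (fpoly (4 *: 'X^2 + 6 *: 'X - 4%:P)) (fpow PsiNeg 3))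
        (fmul (fpoly (3 *: (4 *: 'X^3 + 2 *: 'X^2 - 'X - 5%:P))) (fpow PsiNeg 5)))).

(* Main.v *)
Require Import Defs.
From mathcomp Require Import all_boot all_order all_algebra.
From mathcomp Require Import ring zify.
Set Implicit Arguments. Unset Strict Implicit. Unset Printing Implicit Defensive.
Import GRing.Theory Num.Theory.
Local Open Scope ring_scope.


Notation P := ({poly int}).

Definition I (N : nat) (m : P) (p : P) := exists G K, p = m * G + 'X^N * K.

Section Ideal.
Variables (N : nat) (m : P).

Lemma I0 : I N m 0. Proof. by exists 0, 0; ring. Qed.
Lemma ID p q : I N m p -> I N m q -> I N m (p + q).
Proof. move=> [G [K ->]] [G' [K' ->]]; exists (G + G'), (K + K'); ring. Qed.
Lemma IN p : I N m p -> I N m (- p).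
Proof. move=> [G [K ->]]; exists (- G), (- K); ring. Qed.
Lemma IB p q : I N m p -> I N m q -> I N m (p - q).
Proof. by move=> Hp Hq; apply: ID => //; apply: IN. Qed.
Lemma IMr p q : I N m p -> I N m (p * q).
Proof. move=> [G [K ->]]; exists (G * q), (K * q); ring. Qed.
Lemma IMl p q : I N m p -> I N m (q * p).
Proof. by rewrite mulrC; apply: IMr. Qed.
Lemma IMm q : I N m (m * q). Proof. by exists q, 0; ring. Qed.
Lemma IX q : I N m ('X^N * q). Proof. by exists 0, q; ring. Qed.
Lemma I_of0 p : I N 0 p -> I N m p.
Proof. move=> [G [K ->]]; exists 0, K; ring. Qed.
Lemma Ieq p q : p = q -> I N m p -> I N m q. Proof. by move=> ->. Qed.

Definition C (p q : P) := I N m (p - q).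
Lemma Crefl p : C p p. Proof. by rewrite /C subrr; apply: I0. Qed.
Lemma Csym p q : C p q -> C q p.
Proof. by rewrite /C => H; apply: (Ieq _ (IN H)); ring. Qed.
Lemma Ctrans p q r : C p q -> C q r -> C p r.
Proof. by rewrite /C => H1 H2; apply: (Ieq _ (ID H1 H2)); ring. Qed.
Lemma CD p q p' q' : C p q -> C p' q' -> C (p + p') (q + q').
Proof. by rewrite /C => H1 H2; apply: (Ieq _ (ID H1 H2)); ring. Qed.
Lemma CM p q p' q' : C p q -> C p' q' -> C (p * p') (q * q').
Proof.
rewrite /C => H1 H2; apply: (Ieq _ (ID (IMr p' H1) (IMl q H2))); ring.
Qed.
Lemma Ceq p q : p = q -> C p q. Proof. by move=> ->; apply: Crefl. Qed.

Lemma Icancel a b c : I N m (a * b - 1) -> I N m (a * c) -> I N m c.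
Proof.
move=> H1 H2; apply: (Ieq _ (IB (IMl b H2) (IMl c H1))); ring.
Qed.
End Ideal.

Lemma Imono N N' m p : (N' <= N)%N -> I N m p -> I N' m p.
Proof.
move=> le [G [K ->]]; exists G, ('X^(N - N') * K).
by rewrite mulrA -exprD subnKC.
Qed.

Lemma Icube N p : I N 3 p -> I N 27 (p ^+ 3).
Proof.
move=> [G [K ->]]; exists (G ^+ 3), (K * (3 * (3 * G) ^+ 2 + 3 * (3 * G) * ('X^N * K) + ('X^N * K) ^+ 2)).
ring.
Qed.


Definition agree N (f : fps) (p : P) := forall n, (n <= N)%N -> f n = p`_n.

Lemma agree_add N f g p q : agree N f p -> agree N g q -> agree N (fadd f g) (p + q).
Proof. by move=> Hf Hg n le; rewrite /fadd coefD Hf // Hg. Qed.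

Lemma agree_mul N f g p q : agree N f p -> agree N g q -> agree N (fmul f g) (p * q).
Proof.
move=> Hf Hg n le; rewrite /fmul coefM; apply: eq_bigr => i _.
have hi : (i <= N)%N by apply: leq_trans le; rewrite -ltnS.
by rewrite Hf // Hg // (leq_trans (leq_subr _ _) le).
Qed.

Lemma agree_poly N p : agree N (fpoly p) p. Proof. by []. Qed.

Lemma agree_one N : agree N fone 1.
Proof. by move=> n _; rewrite /fone coefC; case: (n == 0%N). Qed.

Lemma agree_pow N f p k : agree N f p -> agree N (fpow f k) (p ^+ k).
Proof.
move=> Hf; elim: k => [|k IH]; first exact: agree_one.
by rewrite exprS; apply: agree_mul.
Qed.

Definition geo (R : comNzRingType) (y : R) n := \sum_(i < n) y ^+ i.
Lemma geoE (R : comNzRingType) (y : R) n : (1 - y) * geo y n = 1 - y ^+ n.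
Proof.
rewrite /geo; elim: n => [|n IH]; first by rewrite big_ord0 expr0; ring.
by rewrite big_ord_recr /= mulrDr IH exprS; ring.
Qed.

Definition Gp N : P := geo 'X N.+1.

Lemma agree_geom N : agree N geom (Gp N).
Proof.
move=> n le; rewrite /Gp /geo coef_sum /geom.
have hn : (n < N.+1)%N by [].
rewrite (bigD1 (Ordinal hn)) //= coefXn eqxx big1 ?addr0 //.
by move=> i /eqP ne; rewrite coefXn; case: eqP => // h; case: ne; apply: val_inj.
Qed.

Definition Pp N : P := \prod_(j < N.+1) (1 - 'X^(3 ^ j)).

Lemma ltn3 n : (n < 3 ^ n)%N. Proof. exact: ltn_expl. Qed.

Lemma Pp_coef n d : (Pp (n + d))`_n = (Pp n)`_n.
Proof.
elim: d => [|d IH]; first by rewrite addn0.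
rewrite addnS /Pp big_ord_recr /= mulrBr mulr1 coefB coefMXn.
have -> : (n < 3 ^ (n + d).+1)%N.
  apply: (leq_trans (ltn3 n)); rewrite leq_exp2l //; apply: leq_trans (leq_addr d n) _; exact: leqnSn.
by rewrite subr0 -IH.
Qed.

Lemma agree_Psi N : agree N PsiNeg (Pp N).
Proof.
move=> n le; rewrite /PsiNeg -(subnKC le) Pp_coef //.
Qed.

Definition D0 : P := (((2 * 10 + 5)) + ((- ((1 * 10 + 1) * 10 + 9))) * 'X^1 + ((2 * 10 + 1)) * 'X^2 + (((2 * 10 + 1) * 10 + 7)) * 'X^3 + (((1 * 10 + 0) * 10 + 7)) * 'X^4 + ((- ((3 * 10 + 6) * 10 + 9))) * 'X^5 + ((- ((1 * 10 + 0) * 10 + 5))) * 'X^6 + (((1 * 10 + 9) * 10 + 5)) * 'X^7 + (((1 * 10 + 4) * 10 + 4)) * 'X^8 + ((- ((1 * 10 + 1) * 10 + 6))) * 'X^9).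
Definition D1 : P := ((((1 * 10 + 5) * 10 + 6)) + ((- ((8 * 10 + 4) * 10 + 0))) * 'X^1 + (((6 * 10 + 9) * 10 + 2)) * 'X^2 + (((7 * 10 + 5) * 10 + 2)) * 'X^3 + (((1 * 10 + 8) * 10 + 0)) * 'X^4 + ((- (((1 * 10 + 8) * 10 + 6) * 10 + 4))) * 'X^5 + (((3 * 10 + 3) * 10 + 2)) * 'X^6 + (((4 * 10 + 8) * 10 + 0)) * 'X^7 + (((5 * 10 + 6) * 10 + 0)) * 'X^8 + ((- ((4 * 10 + 4) * 10 + 8))) * 'X^9).
Definition D2 : P := ((((3 * 10 + 6) * 10 + 0)) + ((- (((2 * 10 + 0) * 10 + 8) * 10 + 8))) * 'X^1 + ((((2 * 10 + 5) * 10 + 4) * 10 + 4)) * 'X^2 + (((2 * 10 + 4) * 10 + 0)) * 'X^3 + (((6 * 10 + 4) * 10 + 8)) * 'X^4 + ((- (((3 * 10 + 7) * 10 + 2) * 10 + 0))) * 'X^5 + ((((1 * 10 + 2) * 10 + 4) * 10 + 8)) * 'X^6 + (((5 * 10 + 7) * 10 + 6)) * 'X^7 + (((9 * 10 + 6) * 10 + 0)) * 'X^8 + ((- ((7 * 10 + 6) * 10 + 8))) * 'X^9).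
Definition C3 : P := ((((((1 * 10 + 0) * 10 + 2) * 10 + 6) * 10 + 4)) + ((- ((((6 * 10 + 1) * 10 + 0) * 10 + 6) * 10 + 4))) * 'X^1 + (((((8 * 10 + 2) * 10 + 4) * 10 + 0) * 10 + 0)) * 'X^2 + ((- (((9 * 10 + 5) * 10 + 5) * 10 + 2))) * 'X^3 + (((((2 * 10 + 2) * 10 + 7) * 10 + 4) * 10 + 4)) * 'X^4 + ((- (((((1 * 10 + 0) * 10 + 0) * 10 + 4) * 10 + 5) * 10 + 6))) * 'X^5 + (((((3 * 10 + 8) * 10 + 8) * 10 + 3) * 10 + 2)) * 'X^6 + (((((1 * 10 + 1) * 10 + 9) * 10 + 6) * 10 + 8)) * 'X^7 + (((((2 * 10 + 4) * 10 + 3) * 10 + 2) * 10 + 0)) * 'X^8 + ((- ((((1 * 10 + 9) * 10 + 4) * 10 + 5) * 10 + 6))) * 'X^9).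
Definition C4 : P := (((((4 * 10 + 9) * 10 + 8) * 10 + 0)) + ((- ((((2 * 10 + 9) * 10 + 1) * 10 + 8) * 10 + 4))) * 'X^1 + (((((3 * 10 + 7) * 10 + 0) * 10 + 3) * 10 + 2)) * 'X^2 + (((7 * 10 + 2) * 10 + 0)) * 'X^3 + ((((8 * 10 + 7) * 10 + 2) * 10 + 4)) * 'X^4 + ((- ((((5 * 10 + 0) * 10 + 1) * 10 + 6) * 10 + 0))) * 'X^5 + (((((1 * 10 + 8) * 10 + 8) * 10 + 6) * 10 + 4)) * 'X^6 + ((((6 * 10 + 5) * 10 + 2) * 10 + 8)) * 'X^7 + (((((1 * 10 + 2) * 10 + 4) * 10 + 8) * 10 + 0)) * 'X^8 + ((- (((9 * 10 + 9) * 10 + 8) * 10 + 4))) * 'X^9).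
Definition C5 : P := ((((9 * 10 + 0) * 10 + 0)) + ((- (((5 * 10 + 0) * 10 + 4) * 10 + 0))) * 'X^1 + ((((5 * 10 + 2) * 10 + 5) * 10 + 6)) * 'X^2 + ((((2 * 10 + 1) * 10 + 6) * 10 + 0)) * 'X^3 + ((((1 * 10 + 7) * 10 + 6) * 10 + 4)) * 'X^4 + ((- ((((1 * 10 + 0) * 10 + 0) * 10 + 8) * 10 + 0))) * 'X^5 + ((((2 * 10 + 1) * 10 + 6) * 10 + 0)) * 'X^6 + ((((2 * 10 + 3) * 10 + 0) * 10 + 4)) * 'X^7 + ((((2 * 10 + 8) * 10 + 8) * 10 + 0)) * 'X^8 + ((- (((2 * 10 + 3) * 10 + 0) * 10 + 4))) * 'X^9).

Definition b1 : P := -3 * ('X + 1) * (1 - 'X) + 9 * (1 - 'X - 'X^2).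
Definition b3 : P := (4 * 'X^2 + 6 * 'X - 4) * (1 - 'X).
Definition b5 : P := 3 * (4 * 'X^3 + 2 * 'X^2 - 'X - 5) * (1 - 'X).

Lemma bigid (Q : P) :
  let E := (1 - 'X) * Q ^+ 2 - 1 in
  (1 - 'X) ^+ 5 * (1 - 4 * 'X) * (2 * Q * (b1 + b3 * Q ^+ 2 + b5 * Q ^+ 4)) ^+ 2
   - (1 - 'X) ^+ 7 * (1 - 2 * 'X) ^+ 2
  = 27 * (D0 + D1 * E + D2 * E ^+ 2) + E ^+ 3 * (C3 + C4 * E + C5 * E ^+ 2).
Proof. rewrite /b1 /b3 /b5 /D0 /D1 /D2 /C3 /C4 /C5 /=. ring. Qed.


Lemma IXn M m k q : (M <= k)%N -> I M m ('X^k * q).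
Proof.
move=> le; apply: (Ieq _ (IX M m ('X^(k - M) * q))).
by rewrite mulrA -exprD subnKC.
Qed.

Lemma frob M n :
  C M 3 ((\prod_(j < n) (1 - 'X^(3 ^ j))) ^+ 3) (\prod_(j < n) (1 - 'X^(3 ^ j.+1)) : P).
Proof.
elim: n => [|n IH]; first by rewrite !big_ord0 expr1n; apply: Crefl.
rewrite !big_ord_recr /= exprMn; apply: CM => //.
rewrite /C expnSr exprM; apply: (Ieq _ (IMm _ _ (('X^(3 ^ n)) ^+ 2 - 'X^(3 ^ n)))).
ring.
Qed.

Lemma PpQ N : (1 - 'X) * \prod_(j < N.+1) (1 - 'X^(3 ^ j.+1)) =
   Pp N * (1 - 'X^(3 ^ N.+1)) :> P.
Proof.
rewrite /Pp [in RHS]big_ord_recl [in LHS]big_ord_recr /= expn0 expr1.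
under [in RHS]eq_bigr => i _ do rewrite /bump /= add1n.
ring.
Qed.

Lemma PE N : I N.+1 3 (Pp N * ((1 - 'X) * Pp N ^+ 2 - 1)).
Proof.
have h1 := frob N.+1 N.+1.
rewrite /C in h1.
have h2 : I N.+1 3 (Pp N * 'X^(3 ^ N.+1)).
  by rewrite mulrC; apply: IXn; apply: ltnW; apply: ltn3.
apply: (Ieq _ (IB (IMl (1 - 'X) h1) h2)).
rewrite mulrBr PpQ -/(Pp N); ring.
Qed.

Definition Pinv N : P := \prod_(j < N.+1) geo ('X^(3 ^ j)) N.+1.

Lemma Pinv_ok N : I N.+1 3 (Pp N * Pinv N - 1).
Proof.
apply: I_of0.
suff : forall n, C N.+1 0 ((\prod_(j < n) (1 - 'X^(3 ^ j))) * \prod_(j < n) geo ('X^(3 ^ j)) N.+1) 1 by apply.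
elim=> [|n IH]; first by rewrite !big_ord0 mulr1; apply: Crefl.
rewrite !big_ord_recr /= mulrACA.
apply: (Ctrans (q := 1 * 1)); last by rewrite mulr1; apply: Crefl.
apply: CM; first exact: IH.
rewrite /C geoE -exprM; apply: (Ieq _ (IN (IXn 0 1 _))).
  ring.
by rewrite leq_pmull // expn_gt0.
Qed.

Lemma E3 N : I N.+1 3 ((1 - 'X) * Pp N ^+ 2 - 1).
Proof. apply: (Icancel (Pinv_ok N)); apply: PE. Qed.


Lemma coefs_I N (p : P) : (forall n, (n < N)%N -> p`_n = 0) -> I N 0 p.
Proof.
move=> H; exists 0, (drop_poly N p).
rewrite -{1}(poly_take_drop N p) mul0r add0r mulrC.
have -> : take_poly N p = 0.
  by apply/polyP => i; rewrite coef_take_poly coef0; case: ifP => // /H.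
by rewrite add0r.
Qed.


Lemma derI N (p : P) n : I N 0 (p^`()) -> (0 < n <= N)%N -> p`_n = 0.
Proof.
move=> [G [K e]] /andP [n0 nN].
have := congr1 (fun q : P => q`_n.-1) e.
rewrite /= coef_deriv prednK // mul0r add0r coefXnM.
have -> : (n.-1 < N)%N by rewrite prednK.
move/eqP; rewrite mulrn_eq0 => /orP [/eqP n00|/eqP //].
by rewrite n00 in n0.
Qed.

Definition Bp N : P := \poly_(i < N.+1) ('C(i.*2, i))%:R.

Lemma binrec m : ('C((m.+1).*2, m.+1) * m.+1 = 'C(m.*2, m) * (m.*2.+1).*2)%N.
Proof.
have h1 := mul_bin_diag (m.*2.+2) m.
have h2 := mul_bin_diag (m.*2.+1) m.
have h3 : 'C(m.*2.+1, m) = 'C(m.*2.+1, m.+1).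
  rewrite -bin_sub; last by rewrite -addnn; lia.
  by congr 'C(_,_); rewrite -addnn; lia.
rewrite doubleS; rewrite /= h3 in h1.
move: h1 h2; rewrite -!muln2 /=.
move: ('C(_, m.+1)) ('C(_, m.+1)) ('C(_, m)) => a b c; nia.
Qed.

Lemma Bder N : I N 0 ((1 - 4 * 'X) * (Bp N)^`() - 2 * Bp N).
Proof.
apply: coefs_I => n lt.
rewrite mulrBl mul1r -mulrA !coefB !mulr_natl !coefMn coefXM !coef_deriv /Bp.
case: n lt => [|k] lt /=.
  by rewrite !coef_poly ltnS lt /= bin1.
rewrite !coef_poly ltnS lt ltnW //.
have e := binrec k.+1.
move/(congr1 (fun x => x%:R : int)): e; rewrite !natrM => e.
move: e; set x := ('C(_, k.+2))%:R; set y := ('C(_, k.+1))%:R => e.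
rewrite -[x *+ _]mulr_natr -[y *+ _ *+ _]mulrnA -[y *+ (_ * _)]mulr_natr.
rewrite -[y *+ 2]mulr_natr e -!muln2 !natrM.
ring.
Qed.

Lemma Bsq N : I N.+1 0 ((1 - 4 * 'X) * Bp N ^+ 2 - 1).
Proof.
set v := (X in I _ _ X).
have hd : v^`() = 2 * Bp N * ((1 - 4 * 'X) * (Bp N)^`() - 2 * Bp N).
  rewrite /v !derivE; ring.
apply: coefs_I => n.
case: n => [|n] lt.
  by rewrite -horner_coef0 /v !hornerE horner_coef0 /Bp coef_poly /= bin0 expr1n subrr.
apply: (@derI N v n.+1) => //.
rewrite hd; apply: IMl; exact: Bder.
Qed.


Section Main.
Variable N : nat.

Definition Rp : P :=
  13%:P + (((- 3 *: ('X + 1)) + (9 *: (1 - 'X - 'X^2)) * Gp N) * Pp N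
  + ((4 *: 'X^2 + 6 *: 'X - 4%:P) * Pp N ^+ 3
     + (3 *: (4 *: 'X^3 + 2 *: 'X^2 - 'X - 5%:P)) * Pp N ^+ 5)).

Lemma agree_rhs : agree N rhs_num Rp.
Proof.
rewrite /rhs_num /Rp.
apply: agree_add; first exact: agree_poly.
apply: agree_add.
  apply: agree_mul; last exact: agree_Psi.
  apply: agree_add; first exact: agree_poly.
  apply: agree_mul; [exact: agree_poly | exact: agree_geom].
apply: agree_add; apply: agree_mul; try exact: agree_poly;
  apply: agree_pow; exact: agree_Psi.
Qed.

Lemma RpE : Rp = 13 + ((-3 * ('X + 1) + 9 * (1 - 'X - 'X^2) * Gp N) * Pp N
  + ((4 * 'X^2 + 6 * 'X - 4) * Pp N ^+ 3
     + (3 * (4 * 'X^3 + 2 * 'X^2 - 'X - 5)) * Pp N ^+ 5)).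
Proof. by rewrite /Rp -!mul_polyC !polyCN !polyC_natr. Qed.

Lemma Pp0 : (Pp N).[0] = 1.
Proof.
rewrite /Pp horner_prod big1 // => i _.
by rewrite !hornerE expr0n expn_eq0 /= subr0.
Qed.

Lemma Gp0 : (Gp N).[0] = 1.
Proof.
rewrite /Gp /geo horner_sum big_ord_recl /= big1 ?addr0.
  by rewrite expr0 hornerE.
by move=> i _; rewrite hornerXn expr0n.
Qed.

Lemma Bp0 : (Bp N).[0] = 1.
Proof. by rewrite horner_coef0 /Bp coef_poly /= bin0. Qed.

Lemma Rp0 : Rp.[0] = 0.
Proof. by rewrite RpE !hornerE Pp0 Gp0. Qed.

Definition Mb : P := b1 + b3 * Pp N ^+ 2 + b5 * Pp N ^+ 4.

Lemma stepA1 : C N.+1 0 ((1 - 'X) * (2 * Rp + 1)) (27 * (1 - 'X) + 2 * Pp N * Mb).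
Proof.
rewrite /C RpE.
rewrite (_ : _ - _ = 18 * (1 - 'X - 'X^2) * Pp N * ((1 - 'X) * Gp N - 1)); last first.
  by rewrite /Mb /b1 /b3 /b5; ring.
apply: IMl; rewrite /Gp geoE.
by apply: (Ieq _ (IN (IX _ _ 1))); ring.
Qed.

Lemma stepA : I N.+1 27 ((1 - 4 * 'X) * (2 * Rp + 1) ^+ 2 - (1 - 2 * 'X) ^+ 2).
Proof.
apply: (@Icancel _ _ ((1 - 'X) ^+ 7) (Gp N ^+ 7)).
  apply: I_of0; rewrite -exprMn /Gp geoE.
  set y : P := 'X^(N.+1).
  rewrite (_ : _ - 1 = - (y * geo (1 - y) 7)); last by rewrite -[y in - (y * _)](subKr 1) geoE; ring.
  by apply: IN; apply: IX.
have h1 := stepA1.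
have h2 : C N.+1 27 (27 * (1 - 'X) + 2 * Pp N * Mb) (2 * Pp N * Mb).
  by rewrite /C; apply: (Ieq _ (IMm _ _ (1 - 'X))); ring.
have h3 : C N.+1 27 ((1 - 'X) * (2 * Rp + 1)) (2 * Pp N * Mb).
  by apply: Ctrans h2; apply: (Ieq _ (I_of0 27 h1)).
have h4 := CM h3 h3.
have h5 : I N.+1 27 ((1 - 'X) ^+ 5 * (1 - 4 * 'X) * (2 * Pp N * Mb) ^+ 2
   - (1 - 'X) ^+ 7 * (1 - 2 * 'X) ^+ 2).
  rewrite /Mb bigid; apply: ID; first exact: IMm.
  rewrite mulrC; apply: IMl; apply: Icube; exact: E3.
apply: (Ieq _ (ID (IMl ((1 - 'X) ^+ 5 * (1 - 4 * 'X)) h4) h5)).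
rewrite /C; ring.
Qed.

Definition W : P := (1 - 2 * 'X) * Bp N.

Lemma stepB : I N.+1 27 ((2 * Rp + 1 - W) * (2 * Rp + 1 + W)).
Proof.
apply: (@Icancel _ _ (1 - 4 * 'X) (geo (4 * 'X) N.+1)).
  rewrite geoE exprMn; apply: I_of0.
  by apply: (Ieq _ (IN (IX _ _ (4 ^+ N.+1)))); ring.
have hb := Bsq N.
apply: (Ieq _ (IB stepA (I_of0 27 (IMl ((1 - 2 * 'X) ^+ 2) hb)))).
rewrite /W; ring.
Qed.

Lemma powI (a b : P) k : I k 27 ((27 * a + 'X * b) ^+ k).
Proof.
elim: k => [|k [c [d e]]]; first by exists 0, 1; rewrite !expr0; ring.
exists (c * (27 * a + 'X * b) + 'X^k * d * a), (d * b).
rewrite exprS e exprS; ring.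
Qed.

Lemma stepC : I N.+1 27 (2 * Rp + 1 - W).
Proof.
have : root (2 * Rp + 1 + W - 2) 0.
  by rewrite /root /W !hornerE Pp0 Gp0 Bp0.
move/factor_theorem => [Z eZ].
rewrite polyC0 subr0 in eZ.
set y : P := 27 + 'X * (14 * Z).
apply: (@Icancel _ _ (2 * Rp + 1 + W) (14 * geo (- y) N.+1)); last first.
  by rewrite mulrC; exact: stepB.
have -> : 2 * Rp + 1 + W = 2 + Z * 'X by rewrite -eZ; ring.
rewrite (_ : _ * _ = (1 - (- y)) * geo (- y) N.+1); last by rewrite /y; ring.
rewrite geoE.
have := powI (-1) (- (14 * Z)) N.+1.
rewrite (_ : 27 * -1 + 'X * - (14 * Z) = - y); last by rewrite /y; ring.
by move=> h; apply: (Ieq _ (IN h)); ring.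
Qed.

Definition Hp : P := \poly_(i < N.+1) lhs_num i.

Lemma binid k : ('C(k.+2.*2, k.+2) = 2 * 'C(k.+1.*2, k.+1) + 2 * 'C(k.+1.*2, k))%N.
Proof.
rewrite !doubleS.
have e1 := binS (k.*2.+3) k.+1.
have e2 := binS (k.*2.+2) k.+1.
have e3 := binS (k.*2.+2) k.
have e4 : 'C(k.*2.+2, k.+2) = 'C(k.*2.+2, k).
  rewrite -bin_sub; last by rewrite -addnn; lia.
  by congr 'C(_, _); rewrite -addnn; lia.
lia.
Qed.

Lemma stepD : I N.+1 0 ((2 * Rp + 1 - W) - 2 * (Rp - Hp)).
Proof.
rewrite (_ : _ - _ = 1 - W + 2 * Hp); last by ring.
apply: coefs_I => n lt.
rewrite /W mulrBl mul1r -mulrA !coefD !coefN coef1 !mulr_natl !coefMn.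
rewrite coefB coefMn coefXM /Bp /Hp !coef_poly lt.
case: n lt => [|[|k]] lt /=.
- by rewrite /lhs_num /=.
- by rewrite /lhs_num /= bin1.
rewrite ltnW // /lhs_num /=.
have -> : (2 * (k.+2 - 2) + 2 = k.+1.*2)%N by rewrite -addnn; lia.
have -> : (k.+2 - 2 = k)%N by lia.
rewrite binid natrD !natrM; ring.
Qed.

Lemma stepE : I N.+1 27 (Hp - Rp).
Proof.
have h : I N.+1 27 (2 * (Rp - Hp)).
  apply: (Ieq _ (IB stepC (I_of0 27 stepD))); ring.
apply: (Ieq _ (ID (IN (IMl 14 h)) (IMm _ _ (Rp - Hp)))); ring.
Qed.
End Main.

Lemma Icoef N (p : P) : I N.+1 27 p -> (27 %| p`_N)%Z.
Proof.
move=> [G [K ->]].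
rewrite coefD coefXnM ltnSn addr0 mulr_natl coefMn.
by apply/dvdzP; exists G`_N; rewrite mulr_natr.
Qed.

Theorem theorem5p1 :
  forall k : int, (27 %| lcoef lhs_num k - lcoef rhs_num k)%Z.
Proof.
move=> k; rewrite /lcoef; case: (k + 2) => m; last by rewrite subrr dvdz0.
rewrite (agree_rhs (leqnn m)).
have -> : lhs_num m = (Hp m)`_m by rewrite /Hp coef_poly ltnSn.
rewrite -coefB; apply: Icoef; exact: stepE.
Qed.
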